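(* Let $G\subseteq W(\mathsf D_n)$ be a finite group acting on $L=\bigoplus_{i=-1}^n\mathbb Z l_i$ via $\Phi$, and for $i\in\{-1,\dots,n\}$ let $f_i:G\to L$, $f_i(g)=\Phi(g)l_i-l_i$. Suppose $I\subseteq\{-1,1,\dots,n\}$ is such that $\xi=\frac12\sum_{i\in I}f_i$ is an $L$-valued $1$-cocycle with $0\neq[\xi]\in\mathrm H^1(G,L)$. Let $g\in G$ and let $\beta$ be a signed permutation cycle of $g$ whose underlying cycle is $(a_1\ a_2\ \dots\ a_w)$. If $a_1\in I$, then $\{a_1,\dots,a_w\}\subseteq I$.
   Context: $W(\mathsf B_n)$ is the group of signed permutations of the symbols $j^\pm$ ($j=1,\dots,n$), generated by $\mathfrak S_n$ and the involutions $c_j$ exchanging $j^+,j^-$; each element is $c_{j_1}\cdots c_{j_t}\tau$ with distinct $j_i$, $\tau\in\mathfrak S_n$; $\sigma(c_{j_1}\cdots c_{j_t}\tau)=(-1)^t$ and $W(\mathsf D_n)=\ker\sigma$. Writing $\tau$ as a product of disjoint cycles $\gamma$ (fixed points included as cycles of length one), the signed permutation cycle attached to $\gamma$ is $\beta_\gamma=(\prod_{j_i\in\mathrm{supp}\,\gamma}c_{j_i})\gamma$, and $g=\prod_\gamma\beta_\gamma$; the underlying cycle of $\beta_\gamma$ is $\gamma$. For $g=c_{j_1}\cdots c_{j_t}\tau\in W(\mathsf D_n)$ let $s(i)=-1$ if $i\in\{j_1,\dots,j_t\}$, else $s(i)=1$; $\Phi(g)$ is defined by $\Phi(g)l_0=l_0$,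 $\Phi(g)l_{-1}=l_{-1}+\frac t2l_0-\sum_{s(i)=-1}l_i$, and for $v\ge1$, $u=\tau^{-1}(v)$: $\Phi(g)l_v=l_u$ if $s(u)=1$, $\Phi(g)l_v=l_0-l_u$ if $s(u)=-1$. *)

(* Defs.v *)
From mathcomp Require Import all_boot all_order all_algebra all_fingroup.
Set Implicit Arguments. Unset Strict Implicit. Unset Printing Implicit Defensive.
Import GRing.Theory.
Local Open Scope ring_scope.

(* Symbols j^+ / j^- : the pair (j, true) is j^+, (j, false) is j^-.
   The ordinal j : 'I_n stands for the index j+1 in {1,...,n}. *)
Definition sym (n : nat) := ('I_n * bool)%type.

Definition signed_perm n (p : {perm sym n}) : bool :=
  [forall x : sym n, p (x.1, ~~ x.2) == ((p x).1, ~~ (p x).2)].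

Definition WB n : {set {perm sym n}} := [set p | signed_perm p].

(* MathComp composes permutations left to right ((p * q) x = q (p x)), so
   g = c_{j1} ... c_{jt} tau means: first the sign changes, then tau.
   Hence g(u^+) = tau(u)^{s(u)}. *)
Definition tau n (g : {perm sym n}) : 'I_n -> 'I_n := fun u => (g (u, true)).1.
(* the set {j_1,...,j_t}, i.e. the u with s(u) = -1 *)
Definition flips n (g : {perm sym n}) : {set 'I_n} := [set u | ~~ (g (u, true)).2].
Definition tinv n (g : {perm sym n}) (v : 'I_n) : 'I_n := ((g^-1)%g (v, true)).1.

Definition WD n : {set {perm sym n}} := [set p in WB n | ~~ odd #|flips p|].

(* Indices {-1, 0, 1, ..., n}: None = -1, Some None = 0, Some (Some j) = j+1 *)
Definition idx (n : nat) := option (option 'I_n).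
Definition im1 {n} : idx n := None.
Definition i0 {n} : idx n := Some None.
Definition ij {n} (j : 'I_n) : idx n := Some (Some j).

Definition L n := {ffun idx n -> int}.
Definition lb n (i : idx n) : L n := [ffun j => ((j == i) : nat)%:Z].

Definition Phi_basis n (g : {perm sym n}) (i : idx n) : L n :=
  match i with
  | None => lb im1 + lb i0 *~ ((#|flips g|)./2)%:Z
            - \sum_(u in flips g) lb (ij u)
  | Some None => lb i0
  | Some (Some v) =>
      let u := tinv g v in
      if u \in flips g then lb i0 - lb (ij u) else lb (ij u)
  end.

Definition Phi n (g : {perm sym n}) (x : L n) : L n :=
  \sum_(i : idx n) Phi_basis g i *~ x i.

Definition f n (i : idx n) (g : {perm sym n}) : L n := Phi g (lb i) - lb i.

(* Main.v *)
Require Import Defs.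
From mathcomp Require Import all_boot all_order all_algebra all_fingroup.
Import GRing.Theory.
Local Open Scope ring_scope.

Lemma sum_opt (T: finType) (F : option T -> int) : \sum_x F x = F None + \sum_x F (Some x).
Proof.
rewrite (bigD1 None) //=; congr (_ + _).
rewrite (reindex_omap Some (fun o => o)) //=; last by case.
by apply: eq_bigl => x; rewrite eqxx.
Qed.

Definition bz (b : bool) : int := (b : nat)%:Z.

Lemma sum_bz (T : finType) (P : pred T) : \sum_x bz (P x) = #|[pred x | P x]|%:Z.
Proof.
rewrite -sum1_card big_mkcond /=.
rewrite (big_morph Posz (id2 := 0%N) (op2 := addn) (id1 := 0) (op1 := +%R)) //.
rewrite [RHS]big_mkcond; apply: eq_bigr => x _; rewrite /bz inE; by case: (P x).
Qed.

Lemma ij_eq n (w u : 'I_n) : (ij w == ij u :> idx n) = (w == u).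
Proof. by apply/eqP/eqP => [[]|->]. Qed.

Section SP.
Variables (n : nat) (p : {perm sym n}).
Hypothesis Hp : signed_perm p.

Lemma sp_flip x : p (x.1, ~~ x.2) = ((p x).1, ~~ (p x).2).
Proof. by move/forallP: Hp => /(_ x) /eqP. Qed.

Lemma tinv_tau u : tinv p (tau p u) = u.
Proof.
rewrite /tinv /tau; case E: (p (u, true)) => [v b] /=.
case: b E => E.
  by rewrite -E permK.
have E2 := sp_flip (u, true); rewrite E /= in E2.
by rewrite -E2 permK.
Qed.

Lemma tau_tinv v : tau p (tinv p v) = v.
Proof.
rewrite /tinv /tau; case E: ((p^-1)%g (v, true)) => [u b] /=.
have E1 : p (u, b) = (v, true) by rewrite -E permKV.
case: b E E1 => _ E1; first by rewrite E1.
have E2 := sp_flip (u, false); rewrite E1 /= in E2.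
by rewrite E2.
Qed.

Lemma tau_inj : injective (tau p).
Proof. by move=> u w E; rewrite -(tinv_tau u) E tinv_tau. Qed.

Lemma tinv_inj : injective (tinv p).
Proof. by move=> u w E; rewrite -(tau_tinv u) E tau_tinv. Qed.

Lemma lbE (i j : idx n) : lb i j = bz (j == i).
Proof. by rewrite ffunE. Qed.

Lemma Phi_lb k : Phi p (lb k) = Phi_basis p k.
Proof.
rewrite /Phi (bigD1 k) //= big1 ?addr0; first by rewrite lbE eqxx mulr1z.
by move=> i ik; rewrite lbE (negbTE ik) mulr0z.
Qed.

Lemma PhiB_ij v w : Phi_basis p (ij v) (ij w) =
  if tinv p v \in flips p then - bz (tinv p v == w) else bz (tinv p v == w).
Proof.
rewrite /=; case: ifP => _; rewrite !ffunE /= ?sub0r; by rewrite eq_sym.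
Qed.

Lemma PhiB_ij_i0 v : Phi_basis p (ij v) i0 = bz (tinv p v \in flips p).
Proof. by rewrite /=; case: ifP => _; rewrite !ffunE /= ?subr0. Qed.

Lemma PhiB_ij_im1 v : Phi_basis p (ij v) im1 = 0.
Proof. by rewrite /=; case: ifP => _; rewrite !ffunE /= ?subr0. Qed.

Lemma PhiB_i0 j : Phi_basis p i0 j = lb i0 j.
Proof. by []. Qed.

Lemma PhiB_none_ij w : Phi_basis p im1 (ij w) = - bz (w \in flips p).
Proof.
rewrite /= !ffunE /= ffunMzE !ffunE /= mul0rz !add0r sum_ffunE.
case: (boolP (w \in flips p)) => wF.
  rewrite (bigD1 w) //= big1 ?ffunE ?eqxx ?addr0 //.
  by move=> u /andP[_ uw]; rewrite ffunE /= ij_eq eq_sym (negbTE uw).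
rewrite big1 ?oppr0 // => u uF; rewrite ffunE /= ij_eq.
by case: eqP => // E; rewrite E uF in wF.
Qed.

Lemma PhiB_none_i0 : Phi_basis p im1 i0 = (#|flips p|./2)%:Z.
Proof.
rewrite /= !ffunE /= ffunMzE !ffunE /= sum_ffunE big1 ?subr0 ?add0r ?intz //.
by move=> u _; rewrite ffunE.
Qed.

Lemma PhiB_none_im1 : Phi_basis p im1 im1 = 1.
Proof.
rewrite /= !ffunE /= ffunMzE !ffunE /= sum_ffunE big1 ?subr0 ?addr0 ?mul0rz //.
by move=> u _; rewrite ffunE.
Qed.

End SP.

Section S.
Variables (n : nat) (p : {perm sym n}).
Hypothesis Hp : signed_perm p.
Variables (I : {set idx n}).
Hypothesis HI : i0 \notin I.

Lemma fE i j : f i p j = Phi_basis p i j - lb i j.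
Proof. by rewrite /f Phi_lb !ffunE. Qed.

Lemma S_coef j : (\sum_(i in I) f i p) j =
  (if im1 \in I then Phi_basis p im1 j - lb im1 j else 0) +
  \sum_v (if ij v \in I then Phi_basis p (ij v) j - lb (ij v) j else 0).
Proof.
rewrite sum_ffunE big_mkcond sum_opt sum_opt (negbTE HI) add0r.
congr (_ + _); first by case: ifP; rewrite ?fE.
by apply: eq_bigr => v _; case: ifP; rewrite ?fE.
Qed.

Lemma S_im1 : (\sum_(i in I) f i p) im1 = 0.
Proof.
rewrite S_coef PhiB_none_im1 lbE eqxx subrr if_same add0r big1 // => v _.
by rewrite PhiB_ij_im1 lbE subrr if_same.
Qed.

Lemma S_i0 : (\sum_(i in I) f i p) i0 =
  (if im1 \in I then (#|flips p|./2)%:Z else 0) +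
  #|[pred v | (ij v \in I) && (tinv p v \in flips p)]|%:Z.
Proof.
rewrite S_coef PhiB_none_i0 lbE /= subr0 -sum_bz; congr (_ + _).
apply: eq_bigr => v _; rewrite PhiB_ij_i0 lbE /= subr0.
by case: ifP.
Qed.

Lemma S_ij w : (\sum_(i in I) f i p) (ij w) =
  - bz ((im1 \in I) && (w \in flips p)) +
  (if w \in flips p then - bz (ij (tau p w) \in I) else bz (ij (tau p w) \in I))
  - bz (ij w \in I).
Proof.
rewrite S_coef PhiB_none_ij lbE /= subr0 -addrA; congr (_ + _).
  by case: ifP.
have -> : \sum_v (if ij v \in I then Phi_basis p (ij v) (ij w) - lb (ij v) (ij w) else 0)
  = \sum_v (if ij v \in I then Phi_basis p (ij v) (ij w) else 0)
    - \sum_v (if ij v \in I then lb (ij v) (ij w) else 0).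
  by rewrite -sumrB; apply: eq_bigr => v _; case: ifP; rewrite ?subr0.
congr (_ - _).
  rewrite (bigD1 (tau p w)) //= big1 ?addr0.
    by rewrite PhiB_ij tinv_tau // eqxx; repeat case: ifP => //.
  move=> v vw; rewrite PhiB_ij.
  have -> : (tinv p v == w) = false.
    by apply/negbTE; apply: contra vw => /eqP <-; rewrite tau_tinv.
  by repeat case: ifP => //.
rewrite (bigD1 w) //= big1 ?addr0.
  by rewrite lbE eqxx; case: ifP.
by move=> v vw; rewrite lbE ij_eq eq_sym (negbTE vw) if_same.
Qed.

Lemma f_im1_ij w : f im1 p (ij w) = - bz (w \in flips p).
Proof. by rewrite fE PhiB_none_ij lbE subr0. Qed.
Lemma f_im1_i0 : f im1 p i0 = (#|flips p|./2)%:Z.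
Proof. by rewrite fE PhiB_none_i0 lbE subr0. Qed.
Lemma f_im1_im1 : f im1 p im1 = 0.
Proof. by rewrite fE PhiB_none_im1 lbE eqxx subrr. Qed.

End S.

From mathcomp Require Import zify.

Lemma count_lemma n (s : 'I_n -> 'I_n) (sinj : injective s) (F : {set 'I_n})
  (A : {set 'I_n}) (rel : forall v, (s v \in F) = (v \in A) (+) (s v \in A)) :
  #|F| = (#|[pred v | (v \in A) && (s v \in F)]|).*2.
Proof.
have e1 : #|F| = #|s @^-1: F| by rewrite card_preimset.
set c1 := #|[pred v | (v \in A) && (s v \notin A)]|.
set c2 := #|[pred v | (v \notin A) && (s v \in A)]|.
set c3 := #|[pred v | (v \in A) && (s v \in A)]|.
have e2 : #|s @^-1: F| = c1 + c2.
  rewrite -(cardID A).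
  congr (_ + _); apply: eq_card => v; rewrite !inE rel; by case: (v \in A); case: (s v \in A).
have e3 : #|A| = c3 + c1.
  rewrite -(cardID (s @^-1: A)).
  congr (_ + _); apply: eq_card => v; rewrite !inE; by case: (v \in A); case: (s v \in A).
have e4 : #|s @^-1: A| = c3 + c2.
  rewrite -(cardID A).
  congr (_ + _); apply: eq_card => v; rewrite !inE; by case: (v \in A); case: (s v \in A).
have e5 : #|s @^-1: A| = #|A| by rewrite card_preimset.
have e6 : #|[pred v | (v \in A) && (s v \in F)]| = c1.
  by apply: eq_card => v; rewrite !inE rel; case: (v \in A); case: (s v \in A).
rewrite e6 e1 e2 -addnn; lia.
Qed.

Theorem lemma3p3 (n : nat) (G : {group {perm sym n}}) (HG : G \subset WD n)
  (I : {set idx n}) (HI : i0 \notin I)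
  (xi : {perm sym n} -> L n)
  (Hxi : forall g, g \in G -> xi g *+ 2 = \sum_(i in I) f i g)
  (Hcoc : forall g h, g \in G -> h \in G -> xi (g * h)%g = xi g + Phi g (xi h))
  (Hnz : ~ (exists x : L n, forall g, g \in G -> xi g = Phi g x - x))
  (g : {perm sym n}) (Hg : g \in G) (a : 'I_n) (Ha : ij a \in I) :
  forall k : nat, ij (iter k (tau g) a) \in I.
Proof.
have spG : forall h, h \in G -> signed_perm h.
  move=> h Hh; have := subsetP HG h Hh; rewrite !inE.
  by case/andP.
have par : forall h, h \in G -> forall w,
    (ij (tau h w) \in I) = (ij w \in I) (+) ((im1 \in I) && (w \in flips h)).
  move=> h Hh w.
  have E : (xi h *+ 2) (ij w) = (\sum_(i in I) f i h) (ij w) by rewrite Hxi.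
  rewrite S_ij ?spG // ffunMnE mulr2n in E.
  move: E; rewrite /bz.
  case: (im1 \in I); case: (w \in flips h); case: (ij (tau h w) \in I);
    case: (ij w \in I) => //= E; lia.
case Hm: (im1 \in I); last first.
  elim=> [|k IH] //=.
  by rewrite par // Hm andFb addbF.
exfalso; apply: Hnz; exists (lb im1) => h Hh.
have sph := spG h Hh.
have E : xi h *+ 2 = f im1 h *+ 2.
  rewrite Hxi //; apply/ffunP => j; rewrite ffunMnE.
  case: j => [[w|]|].
  - rewrite S_ij // f_im1_ij // par // Hm andTb.
    rewrite /bz mulr2n.
    case: (ij w \in I); case: (w \in flips h) => /=; lia.
  - rewrite S_i0 // f_im1_i0 // Hm.
    have C := @count_lemma n (tinv h) (@tinv_inj n h sph) (flips h) [set v | ij v \in I].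
    rewrite C.
    + have -> : #|[pred v | (v \in [set v | ij v \in I]) && (tinv h v \in flips h)]| =
               #|[pred v | (ij v \in I) && (tinv h v \in flips h)]|.
        by apply: eq_card => v; rewrite !inE.
      rewrite doubleK mulr2n. lia.
    + move=> v; rewrite !inE.
      have := par h Hh (tinv h v); rewrite tau_tinv // Hm andTb => ->.
      rewrite [tinv h v \in flips h]inE.
      by case: (ij (tinv h v) \in I); case: (~~ _).
  - by rewrite S_im1 // f_im1_im1 // mul0rn.
apply/ffunP => j; move/ffunP/(_ j): E; rewrite !ffunMnE !mulr2n /f.
move: (xi h j) ((Phi h (lb im1) - lb im1) j) => x y E; lia.
Qed.
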